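(* Let $N = q^k n^2$ be an odd perfect number given in Eulerian form. Then $$I(n) > \left(\frac{8}{5}\right)^{\frac{\ln(4/3)}{\ln(13/9)}} \approx 1.44440557.$$
   Context: For a positive integer $x$, $\sigma(x)$ denotes the sum of the positive divisors of $x$, and $I(x) = \sigma(x)/x$ is the abundancy index. A positive integer $N$ is perfect if $\sigma(N) = 2N$. An odd perfect number $N$ is said to be given in Eulerian form if $N = q^k n^2$ where $q$ is a prime, $q \equiv k \equiv 1 \pmod 4$, $n$ is a positive integer, and $\gcd(q,n) = 1$. *)

(* Defs.v *)
From Stdlib Require Import Reals.
From mathcomp Require Import all_boot.

Definition sigma (x : nat) : nat := \sum_(d <- divisors x) d.

Definition abundancy (x : nat) : R := Rdiv (INR (sigma x)) (INR x).

Definition perfect (N : nat) : Prop := 0 < N /\ sigma N = 2 * N.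

Definition odd_perfect (N : nat) : Prop := odd N /\ perfect N.

Definition eulerian_form (N q k n : nat) : Prop :=
  odd_perfect N /\ N = q ^ k * n ^ 2 /\ prime q /\
  q %% 4 = 1 /\ k %% 4 = 1 /\ coprime q n.

(* Main.v *)
Require Import Defs.
From Stdlib Require Import Reals.
From Stdlib Require Import Lra Psatz Lia.
From mathcomp Require Import all_boot.
From mathcomp Require Import zify.

Lemma divisors_mul m n : 0 < m -> 0 < n -> coprime m n ->
  perm_eq (divisors (m * n)) [seq d1 * d2 | d1 <- divisors m, d2 <- divisors n].
Proof.
move=> m0 n0 cmn.
have mn0 : 0 < m * n by rewrite muln_gt0 m0 n0.
apply: uniq_perm; first exact: divisors_uniq.
  apply: allpairs_uniq; try exact: divisors_uniq.
  move=> [a b] [c d] /allpairsP[[a' b'] /= [Ha Hb [-> ->]]].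
  move=> /allpairsP[[c' d'] /= [Hc Hd [-> ->]]] /= E.
  rewrite -!dvdn_divisors // in Ha Hb Hc Hd.
  have cbm : coprime b' m by rewrite coprime_sym (coprime_dvdr Hb cmn).
  have cdm : coprime d' m by rewrite coprime_sym (coprime_dvdr Hd cmn).
  have can : coprime a' n by rewrite (coprime_dvdl Ha cmn).
  have ccn : coprime c' n by rewrite (coprime_dvdl Hc cmn).
  have E1 : a' = c'.
    have := congr1 (gcdn m) E.
    rewrite Gauss_gcdl 1?coprime_sym // Gauss_gcdl 1?coprime_sym //.
    by rewrite (gcdn_idPr Ha) (gcdn_idPr Hc).
  have E2 : b' = d'.
    have := congr1 (gcdn n) E.
    rewrite Gauss_gcdr 1?coprime_sym // Gauss_gcdr 1?coprime_sym //.
    by rewrite (gcdn_idPr Hb) (gcdn_idPr Hd).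
  by rewrite E1 E2.
move=> d; apply/idP/idP.
  rewrite -dvdn_divisors // => Hd.
  apply/allpairsP; exists (gcdn m d, gcdn n d) => /=.
  split; rewrite -?dvdn_divisors ?dvdn_gcdl //.
  apply/eqP; rewrite eqn_dvd; apply/andP; split.
    have H1 : d %| gcdn m d * n.
      by rewrite muln_gcdl dvdn_gcd Hd dvdn_mulr.
    have H2 : d %| gcdn m d * gcdn n d.
      rewrite muln_gcdr dvdn_gcd H1 /=.
      by rewrite dvdn_mull.
    exact: H2.
  rewrite Gauss_dvd ?dvdn_gcdr //.
  exact: (coprime_dvdl (dvdn_gcdl _ _) (coprime_dvdr (dvdn_gcdl _ _) cmn)).
move=> /allpairsP[[a b] /= [Ha Hb ->]].
rewrite -!dvdn_divisors // in Ha Hb *.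
exact: dvdn_mul.
Qed.

Lemma sigma_mul m n : 0 < m -> 0 < n -> coprime m n ->
  Defs.sigma (m * n) = Defs.sigma m * Defs.sigma n.
Proof.
move=> m0 n0 cmn; rewrite /Defs.sigma (perm_big _ (divisors_mul _ _ m0 n0 cmn)).
rewrite big_allpairs_dep /= big_distrl /=.
apply: eq_bigr => a _; rewrite big_distrr /=.
by apply: eq_bigr => b _.
Qed.

Lemma sigma_pexp p a : prime p -> Defs.sigma (p ^ a) = \sum_(i < a.+1) p ^ i.
Proof.
move=> pp; have p1 : 1 < p by exact: prime_gt1.
have pa0 : 0 < p ^ a by rewrite expn_gt0 prime_gt0.
have E : perm_eq (divisors (p ^ a)) [seq p ^ i | i <- iota 0 a.+1].
  apply: uniq_perm; first exact: divisors_uniq.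
    by rewrite map_inj_uniq ?iota_uniq //; exact: expnI.
  move=> d; rewrite -dvdn_divisors //; apply/dvdn_pfactor/mapP => //.
    by move=> [i Hi ->]; exists i => //; rewrite mem_iota /= add0n ltnS.
  by move=> [i Hi ->]; exists i => //; move: Hi; rewrite mem_iota /= add0n ltnS.
rewrite /Defs.sigma (perm_big _ E) big_map. by rewrite -(big_mkord xpredT (fun i => p ^ i)) /index_iota subn0.
Qed.

Lemma geom p a : 0 < p -> (p.-1 * \sum_(i < a.+1) p ^ i).+1 = p ^ a.+1.
Proof.
move=> p0; rewrite -predn_exp prednK // expn_gt0 p0 //.
Qed.

Section RealPart.
Local Open Scope R_scope.
Lemma ln_le' x y : 0 < x -> x <= y -> ln x <= ln y.
Proof.
move=> x0 [H|->]; [left; exact: ln_increasing | right; reflexivity].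
Qed.

Lemma ln_div' a b : 0 < a -> 0 < b -> ln (a / b) = ln a - ln b.
Proof.
move=> a0 b0; have ib : 0 < / b by exact: Rinv_0_lt_compat.
rewrite /Rdiv ln_mult // ln_Rinv //.
Qed.

Lemma poly_ineq x t : 0 < x -> 0 <= t -> 2 * t <= x ->
  (5 * x + t) ^ 4 <= 625 * (x + t) * x ^ 3.
Proof.
move=> x0 t0 tx.
have h1 : x ^ 2 * t <= x ^ 3 / 2 by nra.
have h2 : x * t ^ 2 <= x ^ 3 / 4 by nra.
have h3 : t ^ 3 <= x ^ 3 / 8 by nra.
have e : (5 * x + t) ^ 4 = 625 * x ^ 4 + 500 * x ^ 3 * t + t * (150 * (x ^ 2 * t) + 20 * (x * t ^ 2) + t ^ 3) by ring.
rewrite e.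
have : t * (150 * (x ^ 2 * t) + 20 * (x * t ^ 2) + t ^ 3) <= t * (125 * x ^ 3).
  apply: Rmult_le_compat_l => //; nra.
nra.
Qed.

Lemma pp_real A B x : 5 <= x -> x + 1 <= A -> 2 * A <= 3 * x -> B + x = A + A * x ->
  B ^ 4 <= A ^ 5 * x ^ 3.
Proof.
move=> x5 xA A3 E.
have hB : 5 * B <= A * (4 * x + A) by nra.
have B0 : 0 <= 5 * B by nra.
have := pow_incr _ _ 4 (conj B0 hB).
have := poly_ineq x (A - x) ltac:(lra) ltac:(lra) ltac:(lra).
have e1 : 5 * x + (A - x) = 4 * x + A by ring.
have e2 : x + (A - x) = A by ring.
rewrite e1 e2 => h1 h2.
have h3 : (A * (4 * x + A)) ^ 4 = A ^ 4 * (4 * x + A) ^ 4 by ring.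
have A4 : 0 <= A ^ 4 by apply: pow_le; lra.
have := Rmult_le_compat_l _ _ _ A4 h1.
have e3 : (5 * B) ^ 4 = 625 * B ^ 4 by ring.
rewrite h3 e3 in h2.
nra.
Qed.
End RealPart.

Lemma pp_nat P A B x : 0 < P -> P * A + 1 = (P+1) * x -> P * B + 1 = (P+1)*x*x -> B + x = A + A * x.
Proof. move=> P0 h1 h2. have : P * (B + x) = P * (A + A * x) by nia.
move/eqP; rewrite eqn_pmul2l // => /eqP //. Qed.

Lemma pp_nat2 P A x : 2 <= P -> P + 1 <= x -> P * A + 1 = (P+1) * x -> x + 1 <= A /\ 2 * A <= 3 * x.
Proof. move=> P2 Px h1. split; nia. Qed.

Section RealPart2.
Local Open Scope R_scope.
Lemma INR_add m n : INR (m + n)%N = INR m + INR n.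
Proof. by rewrite -plusE plus_INR. Qed.
Lemma INR_mul m n : INR (m * n)%N = INR m * INR n.
Proof. by rewrite -multE mult_INR. Qed.
Lemma INR_le m n : (m <= n)%N -> INR m <= INR n.
Proof. by move/leP; apply: le_INR. Qed.
Lemma INR_pos n : (0 < n)%N -> 0 < INR n.
Proof. by move/ltP; apply: lt_0_INR. Qed.
End RealPart2.

Lemma sigma1 : Defs.sigma 1 = 1.
Proof. rewrite /Defs.sigma. have ->: divisors 1 = [:: 1] by []. by rewrite big_seq1. Qed.

Lemma sigma_ge n : 0 < n -> n <= Defs.sigma n.
Proof.
move=> n0; rewrite /Defs.sigma (big_rem n (divisors_id n0)) /=.
exact: leq_addr.
Qed.

Definition Lab (n : nat) : R := Rminus (ln (INR (Defs.sigma n))) (ln (INR n)).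

Section RealPart3.
Local Open Scope R_scope.

Lemma num_c : 5 * ln (4/3) <= 4 * ln (13/9).
Proof.
have h : (4/3) ^ 5 <= (13/9) ^ 4.
  replace ((4/3)^5) with (1024/243) by field.
  replace ((13/9)^4) with (28561/6561) by field. lra.
have := ln_le' _ _ (pow_lt (4/3) 5 ltac:(lra)) h.
rewrite !ln_pow; try lra.
simpl INR. lra.
Qed.

Lemma ln43_pos : 0 < ln (4/3).
Proof. rewrite -ln_1; apply: ln_increasing; lra. Qed.

Lemma ln139_pos : 0 < ln (13/9).
Proof. rewrite -ln_1; apply: ln_increasing; lra. Qed.

Lemma pp_ln A B x : 5 <= x -> x + 1 <= A -> 2 * A <= 3 * x -> B + x = A + A * x ->
  ln (4/3) * (ln B - ln (x * x)) <= ln (13/9) * (ln A - ln x).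
Proof.
move=> x5 xA A3 E.
have x0 : 0 < x by lra.
have A0 : 0 < A by lra.
have B0 : 0 < B by nra.
have h := pp_real A B x x5 xA A3 E.
have := ln_le' _ _ (pow_lt B 4 B0) h.
rewrite ln_mult; try (apply: pow_lt; lra).
rewrite !ln_pow // ln_mult //.
simpl INR => h2.
have hL : 0 <= ln A - ln x.
  have := ln_le' x A x0 ltac:(lra); lra.
have := num_c; have := ln43_pos; have := ln139_pos.
nra.
Qed.

End RealPart3.

Lemma pp_main p a : prime p -> odd p -> 0 < a ->
  Rle (Rmult (ln (Rdiv 4 3)) (Lab (p ^ (a * 2))))
      (Rmult (ln (Rdiv 13 9)) (Lab (p ^ a))).
Proof.
move=> pp op a0.
have p0 := prime_gt0 pp.
have p3 : 3 <= p.
  have p2 := prime_gt1 pp.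
  have : p != 2 by apply/eqP => e; rewrite e in op.
  lia.
have xp : p <= p ^ a by rewrite -{1}(expn1 p) leq_pexp2l.
have ox : odd (p ^ a) by rewrite oddX op orbT.
have hA : p.-1 * Defs.sigma (p ^ a) + 1 = (p.-1 + 1) * p ^ a.
  by rewrite sigma_pexp // addn1 geom // expnS addn1 prednK.
have hB : p.-1 * Defs.sigma (p ^ (a * 2)) + 1 = (p.-1 + 1) * p ^ a * p ^ a.
  by rewrite sigma_pexp // addn1 geom // expnS addn1 prednK // expnM -mulnn mulnA.
rewrite /Lab expnM -mulnn.
rewrite expnM -mulnn in hB.
move: hA hB ox xp.
set x := p ^ a; set A := Defs.sigma x; set B := Defs.sigma (x * x).
move=> hA hB ox xp.
have P0 : 0 < p.-1 by lia.
have E := pp_nat _ _ _ _ P0 hA hB.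
have [h1 h2] := pp_nat2 p.-1 A x ltac:(lia) ltac:(lia) hA.
have x4 : x != 4 by apply/eqP => e; rewrite e in ox.
have [x3 | x5] : x = 3 \/ 5 <= x by lia.
  have ep : p = 3 by lia.
  have eA : A = 4 by rewrite ep in hA; lia.
  have eB : B = 13 by rewrite eA x3 in E; lia.
  rewrite eA eB x3.
  have e1 : Rdiv (INR 4) (INR 3) = Rdiv 4 3 by simpl; field.
  have e2 : Rdiv (INR 13) (Rmult (INR 3) (INR 3)) = Rdiv 13 9 by simpl; field.
  rewrite INR_mul -e1 -e2 !ln_div'; try (simpl; lra); right; ring.
have rx5 : Rle 5 (INR x).
  have := INR_le _ _ x5; simpl INR; lra.
have rh1 : Rle (Rplus (INR x) 1) (INR A).
  have := INR_le _ _ h1; rewrite INR_add; simpl INR; lra.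
have rh2 : Rle (Rmult 2 (INR A)) (Rmult 3 (INR x)).
  have := INR_le _ _ h2; rewrite !INR_mul; simpl INR; lra.
have rE : Rplus (INR B) (INR x) = Rplus (INR A) (Rmult (INR A) (INR x)).
  by have := f_equal INR E; rewrite !INR_add INR_mul.
rewrite INR_mul.
exact: pp_ln.
Qed.

Lemma sigma_pos n : 0 < n -> Rlt 0 (INR (Defs.sigma n)).
Proof. move=> n0; apply: INR_pos; have := sigma_ge _ n0; lia. Qed.

Lemma Lab_mul m n : 0 < m -> 0 < n -> coprime m n -> Lab (m * n) = Rplus (Lab m) (Lab n).
Proof.
move=> m0 n0 cmn.
rewrite /Lab sigma_mul // !INR_mul !ln_mult; try exact: sigma_pos; try exact: INR_pos.
ring.
Qed.

Lemma key n : 0 < n -> odd n ->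
  Rle (Rmult (ln (Rdiv 4 3)) (Lab (n ^ 2))) (Rmult (ln (Rdiv 13 9)) (Lab n)).
Proof.
elim/ltn_ind: n => n IH n0 on.
case: (ltngtP n 1) => [n1|n1|e1]; first by lia.
  have pp := pdiv_prime n1.
  have pd := pdiv_dvd n.
  have [m cpm En] := pfactor_coprime pp n0.
  move: En; set p := pdiv n; set a := logn p n => En.
  have a0 : 0 < a by rewrite /a logn_gt0 mem_primes pp n0 pd.
  have op : odd p.
    case: (even_prime pp) => // e; move: pd; rewrite e dvdn2 on //.
  have m0 : 0 < m by move: n0; rewrite En muln_gt0 => /andP[].
  have om : odd m by move: on; rewrite En oddM => /andP[].
  have pa1 : 1 < p ^ a.
    have := leq_pexp2l (prime_gt0 pp) a0; rewrite expn1 => h.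
    exact: leq_trans (prime_gt1 pp) h.
  have mN : m < n.
    rewrite En; exact: (ltn_Pmulr pa1 m0).
  have cm : coprime (p ^ a) m by exact: coprimeXl.
  have pa0 : 0 < p ^ a by lia.
  have e2 : (m * p ^ a) ^ 2 = p ^ (a * 2) * m ^ 2 by rewrite expnMn expnM mulnC.
  rewrite En e2 (mulnC m) (Lab_mul (p ^ (a * 2)) (m ^ 2)) 1?(Lab_mul (p ^ a) m) //; last first.
  - by rewrite expnM; apply: coprimeXr; apply: coprimeXl.
  - by rewrite expn_gt0 m0.
  - by rewrite expn_gt0 prime_gt0.
  have h1 := pp_main p a pp op a0.
  have h2 := IH m mN m0 om.
  move: h1 h2; generalize (Lab (p ^ (a * 2))) (Lab (m ^ 2)) (Lab (p ^ a)) (Lab m).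
  move=> X Y U V h1 h2; nra.
rewrite e1 /Lab sigma1 /= ln_1.
lra.
Qed.

Theorem theorem1 (N q k n : nat) :
  eulerian_form N q k n ->
  Rgt (abundancy n)
      (Rpower (Rdiv (INR 8) (INR 5))
              (Rdiv (ln (Rdiv (INR 4) (INR 3))) (ln (Rdiv (INR 13) (INR 9))))).
Proof.
rewrite /eulerian_form /odd_perfect /perfect.
move=> [[oN [N0 sN]] [EN [pq [q4 [k4 cqn]]]]].
have q5 : 5 <= q by have := prime_gt1 pq; lia.
have n0 : 0 < n.
  move: N0; rewrite EN muln_gt0 => /andP[_]; rewrite expn_gt0 orbF //.
have on : odd n by move: oN; rewrite EN oddM !oddX => /andP[_] /=.
have qk0 : 0 < q ^ k by rewrite expn_gt0 prime_gt0.
have M0 : 0 < n ^ 2 by rewrite expn_gt0 n0.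
have cqn2 : coprime (q ^ k) (n ^ 2) by apply: coprimeXl; apply: coprimeXr.
have hS : q.-1 * Defs.sigma (q ^ k) + 1 = q * q ^ k.
  by rewrite sigma_pexp // addn1 geom ?prime_gt0 // expnS.
rewrite EN sigma_mul // in sN.
move: hS sN; set Q := q ^ k; set S := Defs.sigma Q; set T := Defs.sigma (n ^ 2); set M := n ^ 2.
move=> hS sN.
have P4 : 4 <= q.-1 by lia.
have h4 : 4 * S < 5 * Q.
  have e1 : q.-1 * (4 * S) + 4 = 4 * (q * Q) by rewrite mulnCA; lia.
  have e2 : 4 * (q * Q) <= q.-1 * (5 * Q).
    rewrite mulnA (mulnA q.-1) (mulnC q.-1 5) leq_mul2r; apply/orP; right; lia.
  have : q.-1 * (4 * S) < q.-1 * (5 * Q) by lia.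
  by rewrite ltn_pmul2l //; lia.
have M0r : Rlt 0 (INR M) by apply: INR_pos.
have T0r : Rlt 0 (INR T) by apply: INR_pos; have := sigma_ge _ M0; lia.
have Q0r : Rlt 0 (INR Q) by apply: INR_pos.
have h4r : Rlt (Rmult 4 (INR S)) (Rmult 5 (INR Q)).
  have := INR_le _ _ h4; rewrite S_INR !INR_mul; simpl INR; lra.
have sNr : Rmult (INR S) (INR T) = Rmult 2 (Rmult (INR Q) (INR M)).
  have := f_equal INR sN; rewrite !INR_mul; simpl INR; lra.
have h8r : Rlt (Rmult 8 (INR M)) (Rmult 5 (INR T)).
  have h : Rlt (Rmult (INR Q) (Rmult 8 (INR M))) (Rmult (INR Q) (Rmult 5 (INR T))) by nra.
  exact: (Rmult_lt_reg_l _ _ _ Q0r h).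
have hL2 : Rlt (ln (Rdiv 8 5)) (Lab (n ^ 2)).
  rewrite /Lab -/T -/M -ln_div' //.
  apply: ln_increasing; first lra.
  clearbody T M S Q.
  replace (Rdiv (INR T) (INR M)) with
    (Rplus (Rdiv 8 5) (Rdiv (Rminus (Rmult 5 (INR T)) (Rmult 8 (INR M))) (Rmult 5 (INR M)))).
    have : Rlt 0 (Rdiv (Rminus (Rmult 5 (INR T)) (Rmult 8 (INR M))) (Rmult 5 (INR M))).
      apply: Rdiv_lt_0_compat.
        by apply: Rlt_Rminus.
      apply: Rmult_lt_0_compat => //; lra.
    lra.
  field; lra.
have hk := key n n0 on.
have e1 : Rdiv (INR 8) (INR 5) = Rdiv 8 5 by simpl; field.
have e2 : Rdiv (INR 4) (INR 3) = Rdiv 4 3 by simpl; field.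
have e3 : Rdiv (INR 13) (INR 9) = Rdiv 13 9 by simpl; field.
rewrite e1 e2 e3 /Rgt /Rpower /abundancy.
have sn0 := sigma_pos _ n0.
have n0r := INR_pos _ n0.
have ab0 : Rlt 0 (Rdiv (INR (Defs.sigma n)) (INR n)) by apply: Rdiv_lt_0_compat.
rewrite -[X in Rlt _ X](exp_ln _ ab0).
apply: exp_increasing.
rewrite (ln_div' (INR (Defs.sigma n)) (INR n)) //.
have ha := ln43_pos.
have hb := ln139_pos.
move: hk hL2; rewrite /Lab.
generalize (ln (Rdiv 4 3)) (ln (Rdiv 13 9)) (ln (Rdiv 8 5)) ha hb.
move=> a b c ha' hb' hk hL2.
apply: (Rmult_lt_reg_l b) => //.
replace (Rmult b (Rmult (Rdiv a b) c)) with (Rmult a c); last by field; lra.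
nra.
Qed.
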